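(* Let $\phi$ be an embedding of the complete bipartite graph $K_{m,n}$ into a projective plane $\pi$. Then the set of complement lines of $\phi$ is disjoint from the set of lines onto which the edges of $K_{m,n}$ are mapped.
   Context: A finite projective plane: points and lines such that any two distinct points lie on a unique line and any two distinct lines meet in a unique point (with standard nondegeneracy). An embedding of a simple graph $G=(V,E)$ into $\pi$ is an injective map $\phi$ from $V$ to the points of $\pi$ such that the induced map $\overline{\phi}$ sending an edge $ab$ to the line through $\phi(a),\phi(b)$ is injective on $E$; the lines $\overline{\phi}(E)$ are the embedded edges. A complement line of the embedding $\phi$ is a line through $\phi(v)$ and $\phi(w)$ for distinct vertices $v,w$ of $G$ with $vw\notin E$. *)

(* Defs.v *)
From mathcomp Require Import all_boot.
Set Implicit Arguments. Unset Strict Implicit. Unset Printing Implicit Defensive.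

Definition collinear3 (P L : finType) (inc : P -> L -> bool) (p q r : P) :=
  exists l : L, [&& inc p l, inc q l & inc r l].

Record proj_plane (P L : finType) (inc : P -> L -> bool) : Prop := {
  pp_line : forall p q : P, p != q -> exists! l : L, inc p l && inc q l;
  pp_point : forall l m : L, l != m -> exists! p : P, inc p l && inc p m;
  pp_nondeg : exists p1 p2 p3 p4 : P,
      [/\ ~ collinear3 inc p1 p2 p3, ~ collinear3 inc p1 p2 p4,
          ~ collinear3 inc p1 p3 p4 & ~ collinear3 inc p2 p3 p4]
}.

Definition simple_graph (V : finType) (adj : rel V) :=
  symmetric adj /\ irreflexive adj.

Definition Kmn (m n : nat) : rel ('I_m + 'I_n)%type :=
  fun x y => match x, y with
             | inl _, inr _ | inr _, inl _ => true
             | _, _ => false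
             end.

(* l is the line through phi a and phi b (a <> b, phi injective, so this
   line is unique by the projective plane axiom). *)
Definition on_line (V P L : finType) (inc : P -> L -> bool) (phi : V -> P)
  (a b : V) (l : L) := inc (phi a) l && inc (phi b) l.

Definition embedding (V P L : finType) (inc : P -> L -> bool) (adj : rel V)
  (phi : V -> P) : Prop :=
  injective phi /\
  forall (a b c d : V) (l : L), adj a b -> adj c d ->
    on_line inc phi a b l -> on_line inc phi c d l ->
    ((a == c) && (b == d)) || ((a == d) && (b == c)).

Definition embedded_edge (V P L : finType) (inc : P -> L -> bool) (adj : rel V)
  (phi : V -> P) (l : L) : Prop :=
  exists a b : V, adj a b /\ on_line inc phi a b l.

Definition complement_line (V P L : finType) (inc : P -> L -> bool) (adj : rel V)
  (phi : V -> P) (l : L) : Prop :=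
  exists v w : V, [/\ v != w, ~~ adj v w & on_line inc phi v w l].

(* Main.v *)
Require Import Defs.
From mathcomp Require Import all_boot.

Theorem lemma3p7 (P L : finType) (inc : P -> L -> bool) (m n : nat)
  (phi : ('I_m + 'I_n)%type -> P) :
  proj_plane inc -> embedding inc (@Kmn m n) phi ->
  forall l : L, complement_line inc (@Kmn m n) phi l ->
    ~ embedded_edge inc (@Kmn m n) phi l.
Proof.
move=> _ [_ He] l [v [w [Hvw Hna /andP [Hv Hw]]]] [a [b [Hab /andP [Ha Hb]]]].
have key : forall x, Kmn v x -> Kmn w x -> inc (phi x) l -> False.
  move=> x H1 H2 Hx.
  have := He v x w x l H1 H2 (introT andP (conj Hv Hx)) (introT andP (conj Hw Hx)).
  rewrite (negbTE Hvw) /=; clear -H1 H2 Hvw.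
  by case: v w x H1 H2 Hvw => [v|v] [w|w] [x|x].
case: v w a b Hna Hab key Ha Hb {Hvw Hv Hw} => [v|v] [w|w] [a|a] [b|b] //= _ _ key Ha Hb.
- exact: (key (inr b)).
- exact: (key (inr a)).
- exact: (key (inl a)).
- exact: (key (inl b)).
Qed.
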